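(* Let $n,t_1,t_2$ be positive integers with $t_1\ge t_2$. Then $$R(C_{t_1},Q_n)=n+t_1-1\qquad\text{and}\qquad R(\mathcal{C}_{t_1,t_2},Q_n)=n+t_1+1.$$
   Context: $C_t$ denotes a chain (totally ordered poset) on $t$ elements. The parallel composition $P_1+P_2$ of posets is the disjoint union of a copy of $P_1$ and a copy of $P_2$ in which every element of one is incomparable to every element of the other. The chain composition is $\mathcal{C}_{t_1,\dots,t_\ell}=C_{t_1}+\dots+C_{t_\ell}$ with $t_1\ge\dots\ge t_\ell$. $Q_n$ is the Boolean lattice of all subsets of an $n$-element set ordered by inclusion. A copy of a poset $P$ in $Q$ is an induced subposet of $Q$ isomorphic to $P$. $R(P_1,P_2)$ is the smallest integer $N$ such that every blue/red coloring of the elements of $Q_N$ contains an all-blue copy of $P_1$ or an all-red copy of $P_2$. *)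

(* Defs.v *)
From mathcomp Require Import all_boot.
Set Implicit Arguments. Unset Strict Implicit. Unset Printing Implicit Defensive.

Definition chain_le (t : nat) : rel 'I_t := fun x y => (x <= y)%N.

Definition par_le (T1 T2 : Type) (le1 : rel T1) (le2 : rel T2) : rel (T1 + T2) :=
  fun x y => match x, y with
             | inl a, inl b => le1 a b
             | inr a, inr b => le2 a b
             | _, _ => false
             end.

Definition chain2_le (t1 t2 : nat) : rel ('I_t1 + 'I_t2)%type :=
  par_le (@chain_le t1) (@chain_le t2).

Definition bool_le (n : nat) : rel {set 'I_n} := fun A B => A \subset B.

Definition has_copy (T : finType) (le : rel T) (N : nat) (P : pred {set 'I_N}) :=
  exists f : T -> {set 'I_N},
    [/\ injective f,
        (forall x y, le x y = (f x \subset f y)) &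
        (forall x, P (f x))].

(* Ramsey property: every blue/red colouring (true = blue, false = red) of Q_N
   contains a blue copy of P1 or a red copy of P2. *)
Definition ramsey_prop (T1 T2 : finType) (le1 : rel T1) (le2 : rel T2) (N : nat) :=
  forall c : {set 'I_N} -> bool,
    has_copy le1 (fun A => c A) \/ has_copy le2 (fun A => ~~ c A).

Definition poset_ramsey_eq (T1 T2 : finType) (le1 : rel T1) (le2 : rel T2) (m : nat) :=
  ramsey_prop le1 le2 m /\ forall N, (N < m)%N -> ~ ramsey_prop le1 le2 N.

(* Main.v *)
Require Import Defs.
From mathcomp Require Import all_boot zify.
From Stdlib Require Import Classical.
Set Implicit Arguments. Unset Strict Implicit. Unset Printing Implicit Defensive.

Lemma copy_of_embed (T : finType) (le : rel T) N (P : pred {set 'I_N})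
  (f : T -> {set 'I_N}) :
  (forall x y, le x y -> le y x -> x = y) ->
  (forall x y, le x y = (f x \subset f y)) -> (forall x, P (f x)) ->
  has_copy le P.
Proof.
move=> anti emb HP; exists f; split=> //.
move=> x y e; apply: anti; rewrite emb e //.
Qed.

Lemma chain_anti t : forall x y : 'I_t, chain_le x y -> chain_le y x -> x = y.
Proof. by rewrite /chain_le => x y h1 h2; apply: val_inj; apply/eqP; rewrite eqn_leq h1 h2. Qed.

Lemma emb_proper (T : finType) (le : rel T) N (f : T -> {set 'I_N}) x y :
  (forall x y, le x y = (f x \subset f y)) -> le x y -> ~~ le y x ->
  f x \proper f y.
Proof. by move=> emb h1 h2; rewrite properE -!emb h1 h2. Qed.

Lemma chain_card t N (g : 'I_t.+1 -> {set 'I_N}) :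
  (forall x y : 'I_t.+1, (x <= y) = (g x \subset g y)) ->
  forall k, k <= t -> #|g ord0| + k <= #|g (inord k)|.
Proof.
move=> emb; elim=> [|k IH] hk.
  by rewrite addn0 (_ : inord 0 = ord0) //; apply: val_inj; rewrite /= inordK.
have h1 : #|g (inord k)| < #|g (inord k.+1)|.
  apply: proper_card; apply: (@emb_proper _ (fun x y : 'I_t.+1 => x <= y)) => //.
    by rewrite !inordK // ltnW.
  by rewrite -ltnNge !inordK // ltnW.
by rewrite addnS; apply: leq_ltn_trans h1; apply: IH; apply: ltnW.
Qed.

Definition Sk n k : {set 'I_n} := [set x : 'I_n | x < k].

Lemma cube_card n N (f : {set 'I_n} -> {set 'I_N}) :
  (forall x y : {set 'I_n}, (x \subset y) = (f x \subset f y)) ->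
  forall k, k <= n -> #|f (Sk n 0)| + k <= #|f (Sk n k)|.
Proof.
move=> emb; elim=> [|k IH] hk; first by rewrite addn0.
have h1 : #|f (Sk n k)| < #|f (Sk n k.+1)|.
  apply: proper_card; apply: (@emb_proper _ (fun x y : {set 'I_n} => x \subset y)) => //.
    by apply/subsetP=> x; rewrite !inE => /ltnW.
  apply/subsetPn; exists (Ordinal hk); by rewrite !inE /= ?ltnn.
by rewrite addnS; apply: leq_ltn_trans h1; apply: IH; apply: ltnW.
Qed.

Lemma card_le_N N (A : {set 'I_N}) : #|A| <= N.
Proof. by apply: (leq_trans (subset_leq_card (subsetT A))); rewrite cardsT card_ord. Qed.

Lemma lower1 n t N : 0 < t -> N < n + t - 1 -> ~ ramsey_prop (@chain_le t) (@bool_le n) N.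
Proof.
case: t => // t _; rewrite subn1 addnS /= => hN R.
case: (R (fun A : {set 'I_N} => n <= #|A|)) => [[g [_ emb HP]]|[f [_ emb HP]]].
  have := chain_card emb (leqnn t).
  have := HP ord0; have := card_le_N (g (inord t)).
  move=> a b c; have := leq_trans (leq_add b (leqnn t)) c.
  by move=> d; have := leq_trans d a; rewrite leqNgt hN.
have := cube_card emb (leqnn n); have := HP (Sk n n); rewrite -ltnNge.
by move=> a b; have := leq_trans (leq_addl _ _) b; rewrite leqNgt a.
Qed.

Lemma lower2 n t1 t2 N : 0 < t1 -> 0 < t2 -> N < n + t1 + 1 ->
  ~ ramsey_prop (@chain2_le t1 t2) (@bool_le n) N.
Proof.
case: t1 => // t1 _ ht2; rewrite addn1 ltnS addnS => hN R.
case: (R (fun A : {set 'I_N} => (A == set0) || (n < #|A|))) => [[g [_ emb HP]]|[f [_ emb HP]]].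
  pose y0 : 'I_t2 := Ordinal ht2.
  have ne0 : forall a, g (inl a) != set0.
    move=> a; apply/eqP=> e; have := emb (inl a) (inr y0); rewrite e sub0set //.
  have neT : forall a, g (inl a) != setT.
    move=> a; apply/eqP=> e; have := emb (inr y0) (inl a); rewrite e subsetT //.
  have Hc : forall a, n < #|g (inl a)| < N.
    move=> a; have := HP (inl a); rewrite (negbTE (ne0 a)) /= => ->.
    by have := neT a; rewrite -properT => /proper_card; rewrite cardsT card_ord.
  have := @chain_card t1 N (fun a => g (inl a)) (fun x y => emb (inl x) (inl y)) t1 (leqnn _).
  have /andP[a _] := Hc ord0; have /andP[_ b] := Hc (inord t1).
  move=> c; have := leq_trans (leq_add a (leqnn t1)) c.
  move=> d; move: hN b d; clear; move: #|_| => X; lia.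
have := cube_card emb (leqnn n); have := HP (Sk n n); have := HP (Sk n 0).
rewrite !negb_or -!leqNgt => /andP[a _] /andP[_ b].
rewrite -card_gt0 in a.
move=> c; have := leq_trans (leq_add a (leqnn n)) c.
by rewrite add1n => d; have := leq_trans d b; rewrite ltnn.
Qed.

Lemma upper1 n t N : 0 < t -> n + t - 1 <= N -> ramsey_prop (@chain_le t) (@bool_le n) N.
Proof.
case: t => // t _; rewrite subn1 addnS /= => hN c.
case: (classic (has_copy (@chain_le t.+1) (fun A => c A))) => [h|nob]; [by left|right].
pose chn k (Z : {set 'I_N}) := [exists g : {ffun 'I_k -> {set 'I_N}},
   [forall i, c (g i) && (g i \subset Z)] &&
   [forall i, forall j, (nat_of_ord i < nat_of_ord j) ==> (g i \proper g j)]].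
have noT : forall Z, ~~ chn t.+1 Z.
  move=> Z; apply/negP => /existsP[g /andP[/forallP H1 /forallP H2]]; apply: nob.
  apply: (@copy_of_embed _ _ _ _ g); first exact: chain_anti.
    move=> x y; rewrite /chain_le; case: (ltngtP x y) => [lt|gt|eq].
    - by move: (implyP (forallP (H2 x) y) lt); rewrite properE => /andP[-> _].
    - by move: (implyP (forallP (H2 y) x) gt); rewrite properE => /andP[_ /negbTE ->].
    - by rewrite (val_inj eq) subxx.
  by move=> x; case/andP: (H1 x).
pose b Z := \max_(k < t.+2 | chn k Z) k.
have chn0 : forall Z, chn 0 Z.
  by move=> Z; apply/existsP; exists [ffun i => set0]; apply/andP; split; apply/forallP => -[].
have bmono : forall A B : {set 'I_N}, A \subset B -> b A <= b B.
  move=> A B AB; apply/bigmax_leqP => k /existsP[g /andP[/forallP H1 H2]].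
  apply: (leq_bigmax_cond (F:=fun k : 'I_t.+2 => nat_of_ord k)).
  apply/existsP; exists g; rewrite H2 andbT; apply/forallP=> i.
  by case/andP: (H1 i) => -> h; rewrite (subset_trans h AB).
have bnd : forall Z, b Z <= t.
  move=> Z; apply/bigmax_leqP => k hk; rewrite -ltnS; have := ltn_ord k.
  rewrite ltnS leq_eqVlt => /orP[/eqP e|//]; exfalso.
  by move: hk; rewrite e (negbTE (noT Z)).
have ext : forall k (Z' Z : {set 'I_N}), chn k Z' -> Z' \proper Z -> c Z -> chn k.+1 Z.
  move=> k Z' Z /existsP[g /andP[/forallP H1 /forallP H2]] pZ cZ.
  apply/existsP; exists [ffun i : 'I_k.+1 => oapp g Z (insub (val i))].
  apply/andP; split; apply/forallP => i.
  - rewrite ffunE; case: insubP => [j _ vj|_] /=; last by rewrite cZ subxx.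
    by case/andP: (H1 j) => -> h /=; exact: subset_trans h (proper_sub pZ).
  - apply/forallP => j; apply/implyP => lij; rewrite !ffunE.
    case: insubP => [i' hi vi|hi]; case: insubP => [j' hj vj|hj] /=.
    + by apply: (implyP (forallP (H2 i') j')); rewrite vi vj.
    + by case/andP: (H1 i') => _ h; exact: sub_proper_trans h pZ.
    + by exfalso; move: hi hj lij; rewrite /= -leqNgt; lia.
    + by exfalso; move: hi hj lij (ltn_ord j); rewrite /= -!leqNgt; lia.
have binc : forall Z' Z : {set 'I_N}, Z' \proper Z -> c Z -> (b Z').+1 <= b Z.
  move=> Z' Z pZ cZ.
  have key : forall k : 'I_t.+2, chn k Z' -> k.+1 <= b Z.
    move=> k hk; have hk2 := ext _ _ _ hk pZ cZ.
    have lt : k.+1 < t.+2.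
      have := ltn_ord k; rewrite ltnS leq_eqVlt => /orP[/eqP e|//].
      by move: hk; rewrite e (negbTE (noT _)).
    exact: (leq_bigmax_cond (F:=fun k : 'I_t.+2 => nat_of_ord k) (Ordinal lt) hk2).
  have b1 : 1 <= b Z by apply: (key ord0); exact: chn0.
  rewrite -(prednK b1) ltnS; apply/bigmax_leqP => k hk; rewrite -ltnS prednK //; exact: key.
have bblue : forall Z, c Z -> 1 <= b Z.
  move=> Z cZ.
  have hc : chn 1 Z.
    apply/existsP; exists [ffun _ => Z]; apply/andP; split; apply/forallP => i.
      by rewrite ffunE cZ subxx.
    by apply/forallP => j; rewrite !ffunE; case: i; case: j => [[]//] ? [[]//].
  exact: (leq_bigmax_cond (F:=fun k : 'I_t.+2 => nat_of_ord k) (Ordinal (isT : 1 < t.+2)) hc).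
have nN : n <= N by apply: leq_trans hN; apply: leq_addr.
pose w := widen_ord nN.
have winj : injective w by move=> a a' /(congr1 val) /= /val_inj.
pose Y j := [set x : 'I_N | n <= x < n + j].
pose F (A : {set 'I_n}) j := w @: A :|: Y j.
have Fsub : forall (A B : {set 'I_n}) j j', A \subset B -> j <= j' -> F A j \subset F B j'.
  move=> A B j j' AB jj; apply: setUSS; first exact: imsetS.
  by apply/subsetP=> x; rewrite !inE => /andP[-> h]; rewrite (leq_trans h) // leq_add2l.
have FsubX : forall (A B : {set 'I_n}) j j', F A j \subset F B j' -> A \subset B.
  move=> A B j j' /subsetP h; apply/subsetP => x xA.
  have : w x \in F B j' by apply: h; rewrite inE imset_f.
  rewrite inE => /orP[|]; first by rewrite mem_imset.
  by rewrite inE /= leqNgt ltn_ord.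
have Fproper : forall A j, j < t -> F A j \proper F A j.+1.
  move=> A j jt; have hj : n + j < N by apply: leq_trans hN; rewrite ltn_add2l.
  rewrite properE Fsub // ?leqnSn //=; apply/subsetPn; exists (Ordinal hj).
    by rewrite !inE /= leq_addr addnS ltnSn orbT.
  rewrite !inE /= ltnn andbF orbF; apply/imsetP => -[y _ /(congr1 val) /= e].
  by have := ltn_ord y; rewrite -e; lia.
pose p A j := b (F A j) <= j.
pose i A := find (p A) (iota 0 t.+1).
have hasp : forall A, has (p A) (iota 0 t.+1).
  move=> A; apply/hasP; exists t; last exact: bnd. by rewrite mem_iota add0n ltnSn.
have ilt : forall A, i A < t.+1 by move=> A; rewrite -(size_iota 0 t.+1) -has_find.
have pi : forall A, p A (i A).
  move=> A; have := nth_find 0 (hasp A); rewrite nth_iota ?add0n; [exact: id | exact: ilt].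
have npi : forall A k, k < i A -> ~~ p A k.
  move=> A k hk; have := before_find 0 hk; rewrite nth_iota ?add0n => [->//|].
  exact: ltn_trans hk (ilt A).
have imono : forall A B : {set 'I_n}, A \subset B -> i A <= i B.
  move=> A B AB; rewrite leqNgt; apply/negP => lt; have := npi A _ lt.
  by rewrite /p (leq_trans (bmono _ _ (Fsub _ _ _ _ AB (leqnn _))) (pi B)).
have red : forall A, ~~ c (F A (i A)).
  move=> A; apply/negP; move: (pi A) (npi A) (ilt A); case: (i A) => [|j] pA npA ilt' cA.
    by have := bblue _ cA; rewrite ltnNge (pA : b (F A 0) <= 0).
  have h1 := npA j (ltnSn j).
  have h2 := binc _ _ (Fproper A j ilt') cA.
  by move: h1 h2 pA; rewrite /p -ltnNge; move: (b (F A j)) (b (F A j.+1)) => x y; lia.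
apply: (@copy_of_embed _ _ _ _ (fun A => F A (i A))).
- by rewrite /bool_le => A B h1 h2; apply/eqP; rewrite eqEsubset h1 h2.
- move=> A B; rewrite /bool_le; apply/idP/idP => [AB|]; last exact: FsubX.
  exact: Fsub AB (imono _ _ AB).
- exact: red.
Qed.

Lemma upper2 n t1 t2 N : 0 < t1 -> 0 < t2 -> t2 <= t1 -> n + t1 + 1 <= N ->
  ramsey_prop (@chain2_le t1 t2) (@bool_le n) N.
Proof.
move=> ht1 ht2 t21 hN c.
have [M eM] : exists M, N = M.+2 by exists N.-2; lia.
subst N.
have hM : M <= M.+2 by apply: leqW; apply: leqnSn.
pose w := widen_ord hM.
have winj : injective w by move=> x x' /(congr1 val) /= /val_inj.
pose G (s : 'I_M.+2) (A : {set 'I_M}) := w @: A :|: [set s].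
have Gsub : forall s : 'I_M.+2, M <= s -> forall A B, (G s A \subset G s B) = (A \subset B).
  move=> s hs A B; apply/idP/idP => [/subsetP h|AB]; last by apply: setSU; apply: imsetS.
  apply/subsetP => x xA; have : w x \in G s B by apply: h; rewrite inE imset_f.
  rewrite !inE => /orP[|/eqP/(congr1 val) /= e]; first by rewrite mem_imset.
  by move: (ltn_ord x) hs; rewrite -e; lia.
pose a : 'I_M.+2 := Ordinal (leqnSn M.+1).
pose bb : 'I_M.+2 := ord_max.
have transfer : forall (T : finType) (le : rel T) (s : 'I_M.+2), M <= s ->
    forall P : pred {set 'I_M.+2}, has_copy le (fun A => P (G s A)) -> has_copy le P.
  move=> T le s hs P [f [finj emb HP]]; exists (fun x => G s (f x)); split.
  - by move=> x y e; apply: finj; apply/eqP; rewrite eqEsubset -!(Gsub s hs) e subxx.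
  - by move=> x y; rewrite Gsub.
  - exact HP.
have hM1 : n + t1 - 1 <= M by lia.
have hM2 : n + t2 - 1 <= M by lia.
case: (upper1 ht1 hM1 (fun A => c (G a A))) => [[g1 [_ emb1 B1]]|R1]; last first.
  by right; apply: (transfer _ _ a (leqnn M) _ R1).
case: (upper1 ht2 hM2 (fun A => c (G bb A))) => [[g2 [_ emb2 B2]]|R2]; last first.
  by right; apply: (transfer _ _ bb (leqnSn M) _ R2).
left.
pose h (x : ('I_t1 + 'I_t2)%type) := match x with inl u => G a (g1 u) | inr v => G bb (g2 v) end.
have notw : forall (A : {set 'I_M}) (s : 'I_M.+2), M <= s -> s \notin w @: A.
  move=> A s hs; apply/imsetP => -[y _ /(congr1 val) /= e].
  by move: (ltn_ord y) hs; rewrite e; lia.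
have aG : forall A, a \in G a A by move=> A; rewrite !inE eqxx orbT.
have bG : forall A, bb \in G bb A by move=> A; rewrite !inE eqxx orbT.
have aG' : forall A, a \notin G bb A.
  move=> A; rewrite !inE negb_or (notw A a (leqnn M)) /=.
  by apply/eqP => /(congr1 val) /=; lia.
have bG' : forall A, bb \notin G a A.
  move=> A; rewrite !inE negb_or (notw A bb (leqnSn M)) /=.
  by apply/eqP => /(congr1 val) /=; lia.
apply: (@copy_of_embed _ _ _ _ h).
- move=> [u|v] [u'|v'] //= h1 h2; congr (_ _); exact: chain_anti.
- move=> [u|v] [u'|v'] /=.
  + by rewrite Gsub //; apply: emb1.
  + by apply/esym/negbTE; apply/subsetPn; exists a.
  + by apply/esym/negbTE; apply/subsetPn; exists bb.
  + by rewrite Gsub //; apply: emb2.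
- by case.
Qed.

Theorem theorem5 (n t1 t2 : nat) :
  (0 < n)%N -> (0 < t1)%N -> (0 < t2)%N -> (t2 <= t1)%N ->
  poset_ramsey_eq (@chain_le t1) (@bool_le n) (n + t1 - 1) /\
  poset_ramsey_eq (@chain2_le t1 t2) (@bool_le n) (n + t1 + 1).
Proof.
move=> hn ht1 ht2 t21; split; split.
- exact: upper1.
- by move=> N hN; apply: lower1.
- exact: upper2.
- by move=> N hN; apply: lower2.
Qed.
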